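(* Let $R$ be a commutative ring, $M$ an $R$-module, $C$ an $R$-linear relation on $M$, and $(X\mid\rho)$ a reduction of $(M,C)$. Then $\rho$ defines a morphism $(X,\mathrm{graph}(T_X))\to(M,C)$ in $\mathrm{Rel}_R$, where $T_X(x)=Tx$. Furthermore, if $(X\mid\rho)$ meets in the radical, then there is a short exact sequence of $R[T,T^{-1}]$-modules $0\to\mathrm{rad}(X)\to X\to C^\sharp/C^\flat\to0$, where the first map is the inclusion and the second is $x\mapsto\rho(x)+C^\flat$.
   Context: An $R$-linear relation on $M$ is a submodule $C\subseteq M\oplus M$; $Cm=\{m':(m,m')\in C\}$, $C^{-1}=\{(y,x):(x,y)\in C\}$, $\mathrm{graph}(f)=\{(x,f(x))\}$. $\mathrm{Rel}_R$: objects pairs $(M,C)$, morphisms $(L,B)\to(M,C)$ the $R$-linear $f$ with $(f(x),f(y))\in C$ whenever $(x,y)\in B$. $C''$: the $m\in M$ admitting $(m_n)_{n\in\mathbb{N}}$ with $m_0=m$, $m_{n+1}\in Cm_n$ for all $n$; $C'$: those admitting such a sequence with $m_n=0$ for $n\gg0$; $C^\sharp=C''\cap(C^{-1})''$, $C^\flat=C''\cap(C^{-1})'+(C^{-1})''\cap C'$. $C^\sharp/C^\flat$ is an $R[T,T^{-1}]$-module with $T$ acting by the automorphism $m+C^\flat\mapsto m'+C^\flat$ where $m'\in C^\sharp\cap(C^\flat+Cm)$. A reduction of $(M,C)$ is a pair $(X\mid\rho)$, $X$ an $R[T,T^{-1}]$-module, $\rho\colon X\to M$ $R$-linear, with $C^\sharp=C^\flat+\mathrm{im}(\rho)$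 and $\rho(Tx)\in C\rho(x)$ for all $x$; it meets in the radical if $\{x\in X:\rho(x)\in C^\flat\}=\mathrm{rad}(X)$, the radical of $X$ as an $R$-module. *)

(* Defs.v *)
From HB Require Import structures.
From mathcomp Require Import all_boot all_algebra.
Set Implicit Arguments. Unset Strict Implicit. Unset Printing Implicit Defensive.
Import GRing.Theory.
Local Open Scope ring_scope.

Definition is_submod (R : comPzRingType) (M : lmodType R) (N : M -> Prop) : Prop :=
  [/\ N 0, (forall x y, N x -> N y -> N (x + y)) &
      (forall (r : R) x, N x -> N (r *: x))].

(* An R-linear relation on M: a submodule C of M (+) M, as a binary predicate. *)
Definition is_linrel (R : comPzRingType) (M : lmodType R) (C : M -> M -> Prop) : Prop :=
  [/\ C 0 0, (forall a b c d, C a b -> C c d -> C (a + c) (b + d)) &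
      (forall (r : R) a b, C a b -> C (r *: a) (r *: b))].

Definition relinv (M : Type) (C : M -> M -> Prop) : M -> M -> Prop :=
  fun x y => C y x.

Definition graph (X : Type) (f : X -> X) : X -> X -> Prop := fun x y => y = f x.

Definition rel_morph (R : comPzRingType) (L M : lmodType R)
  (B : L -> L -> Prop) (C : M -> M -> Prop) (f : {linear L -> M}) : Prop :=
  forall x y, B x y -> C (f x) (f y).

Definition Cpp (M : Type) (C : M -> M -> Prop) (m : M) : Prop :=
  exists s : nat -> M, s 0%N = m /\ forall n, C (s n) (s n.+1).

Definition Cp (R : comPzRingType) (M : lmodType R) (C : M -> M -> Prop) (m : M) : Prop :=
  exists s : nat -> M, [/\ s 0%N = m, (forall n, C (s n) (s n.+1)) &
                         exists N, forall n, (N <= n)%N -> s n = 0].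

Definition Csharp (M : Type) (C : M -> M -> Prop) (m : M) : Prop :=
  Cpp C m /\ Cpp (relinv C) m.

Definition Cflat (R : comPzRingType) (M : lmodType R) (C : M -> M -> Prop) (m : M) : Prop :=
  exists a b, [/\ m = a + b, Cpp C a /\ Cp (relinv C) a &
                             Cpp (relinv C) b /\ Cp C b].

(* The relation "m' represents T(m + C^flat)": m' in C^sharp /\ (C^flat + C m). *)
Definition Tquot (R : comPzRingType) (M : lmodType R) (C : M -> M -> Prop) (m m' : M) : Prop :=
  Csharp C m' /\ exists c y, [/\ Cflat C c, C m y & m' = c + y].

(* A reduction (X | rho): X an R[T,T^-1]-module, given as an R-module with the
   R-linear automorphism TX by which T acts. *)
Definition is_reduction (R : comPzRingType) (M : lmodType R) (C : M -> M -> Prop)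
  (X : lmodType R) (TX : {linear X -> X}) (rho : {linear X -> M}) : Prop :=
  [/\ bijective TX,
      (forall m, Csharp C m <-> exists c x, Cflat C c /\ m = c + rho x) &
      (forall x, C (rho x) (rho (TX x)))].

Definition maximal_submod (R : comPzRingType) (X : lmodType R) (N : X -> Prop) : Prop :=
  [/\ is_submod N, ~ (forall x, N x) &
      forall N', is_submod N' -> (forall x, N x -> N' x) ->
        (forall x, N' x -> N x) \/ (forall x, N' x)].

Definition modrad (R : comPzRingType) (X : lmodType R) (x : X) : Prop :=
  forall N, maximal_submod N -> N x.

Definition meets_in_radical (R : comPzRingType) (M : lmodType R) (C : M -> M -> Prop)
  (X : lmodType R) (rho : {linear X -> M}) : Prop :=
  forall x, Cflat C (rho x) <-> modrad x.

(* Main.v *)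
Require Import Defs.
From HB Require Import structures.
From mathcomp Require Import all_boot all_algebra.
Import GRing.Theory.
Local Open Scope ring_scope.

Set Implicit Arguments.
Section Aux.
Variables (R : comPzRingType) (M : lmodType R).

Lemma linrel_inv (C : M -> M -> Prop) : is_linrel C -> is_linrel (relinv C).
Proof.
case=> H0 HD HZ; split; rewrite /relinv //.
- by move=> a b c d h1 h2; apply: HD.
- by move=> r a b h; apply: HZ.
Qed.

Lemma Cpp0 (C : M -> M -> Prop) : is_linrel C -> Cpp C 0.
Proof. case=> H0 _ _; by exists (fun _ => 0). Qed.

Lemma CppD (C : M -> M -> Prop) a b : is_linrel C -> Cpp C a -> Cpp C b -> Cpp C (a + b).
Proof.
case=> _ HD _ [s [s0 hs]] [t [t0 ht]].
exists (fun n => s n + t n); split; first by rewrite s0 t0.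
by move=> n; apply: HD.
Qed.

Lemma CppZ (C : M -> M -> Prop) r a : is_linrel C -> Cpp C a -> Cpp C (r *: a).
Proof.
case=> _ _ HZ [s [s0 hs]].
exists (fun n => r *: s n); split; first by rewrite s0.
by move=> n; apply: HZ.
Qed.

Lemma Cp0 (C : M -> M -> Prop) : is_linrel C -> Cp C 0.
Proof. case=> H0 _ _; exists (fun _ => 0); split => //; by exists 0%N. Qed.

Lemma CpD (C : M -> M -> Prop) a b : is_linrel C -> Cp C a -> Cp C b -> Cp C (a + b).
Proof.
case=> _ HD _ [s [s0 hs [N1 hN1]]] [t [t0 ht [N2 hN2]]].
exists (fun n => s n + t n); split; first by rewrite s0 t0.
  by move=> n; apply: HD.
exists (maxn N1 N2) => n hn.
rewrite hN1 ?hN2 ?addr0 //.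
  by apply: leq_trans hn; apply: leq_maxr.
by apply: leq_trans hn; apply: leq_maxl.
Qed.

Lemma CpZ (C : M -> M -> Prop) r a : is_linrel C -> Cp C a -> Cp C (r *: a).
Proof.
case=> _ _ HZ [s [s0 hs [N hN]]].
exists (fun n => r *: s n); split; first by rewrite s0.
  by move=> n; apply: HZ.
by exists N => n hn; rewrite hN ?scaler0.
Qed.

Lemma Cp_Cpp (C : M -> M -> Prop) a : Cp C a -> Cpp C a.
Proof. by case=> s [s0 hs _]; exists s. Qed.

Lemma Cflat0 (C : M -> M -> Prop) : is_linrel C -> Cflat C 0.
Proof.
move=> hC; have hI := linrel_inv hC.
exists 0, 0; split; first by rewrite addr0.
- by split; [apply: Cpp0 | apply: Cp0].
- by split; [apply: Cpp0 | apply: Cp0].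
Qed.

Lemma CflatD (C : M -> M -> Prop) x y : is_linrel C -> Cflat C x -> Cflat C y -> Cflat C (x + y).
Proof.
move=> hC; have hI := linrel_inv hC.
case=> [a [b [-> [h1 h2] [h3 h4]]]] [c [d [-> [h5 h6] [h7 h8]]]].
exists (a + c), (b + d); split.
- by rewrite addrACA.
- by split; [apply: CppD | apply: CpD].
- by split; [apply: CppD | apply: CpD].
Qed.

Lemma CflatZ (C : M -> M -> Prop) r x : is_linrel C -> Cflat C x -> Cflat C (r *: x).
Proof.
move=> hC; have hI := linrel_inv hC.
case=> [a [b [-> [h1 h2] [h3 h4]]]].
exists (r *: a), (r *: b); split.
- by rewrite scalerDr.
- by split; [apply: CppZ | apply: CpZ].
- by split; [apply: CppZ | apply: CpZ].
Qed.

Lemma CflatN (C : M -> M -> Prop) x : is_linrel C -> Cflat C x -> Cflat C (- x).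
Proof. by move=> hC h; rewrite -scaleN1r; apply: CflatZ. Qed.

Lemma Cflat_Cpp (C : M -> M -> Prop) x : is_linrel C -> Cflat C x -> Cpp C x.
Proof.
move=> hC [a [b [-> [h1 h2] [h3 h4]]]].
by apply: CppD => //; apply: Cp_Cpp.
Qed.

End Aux.

Section Rad.
Variables (R : comPzRingType) (X : lmodType R).

Lemma premax (f g : X -> X) (fD : forall a b, f (a + b) = f a + f b)
  (fZ : forall (r : R) a, f (r *: a) = r *: f a)
  (fg : cancel f g) (gf : cancel g f) (N : X -> Prop) :
  maximal_submod N -> maximal_submod (fun x => N (f x)).
Proof.
have f0 : f 0 = 0 by have := fZ 0 0; rewrite !scale0r.
have gD : forall a b, g (a + b) = g a + g b.
  by move=> a b; apply: (can_inj fg); rewrite fD !gf.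
have gZ : forall (r : R) a, g (r *: a) = r *: g a.
  by move=> r a; apply: (can_inj fg); rewrite fZ !gf.
case=> [[N0 ND NZ] Nall Nmax]; split.
- split; first by rewrite f0.
  + by move=> x y hx hy; rewrite fD; apply: ND.
  + by move=> r x hx; rewrite fZ; apply: NZ.
- by move=> h; apply: Nall => y; rewrite -(gf y); apply: h.
- move=> N' [N'0 N'D N'Z] hsub.
  have sub'' : is_submod (fun y => N' (g y)).
    split.
    + by rewrite -f0 fg.
    + by move=> x y hx hy; rewrite gD; apply: N'D.
    + by move=> r x hx; rewrite gZ; apply: N'Z.
  have inc : forall x, N x -> N' (g x).
    by move=> x hx; apply: hsub; rewrite gf.
  case: (Nmax _ sub'' inc) => h.
  + by left => x hx; apply: h; rewrite fg.
  + by right => x; rewrite -(fg x); apply: h.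
Qed.

Lemma modrad_submod : is_submod (@modrad R X).
Proof.
split.
- by move=> N [[N0 _ _] _ _].
- by move=> x y hx hy N hN; case: (hN) => [[_ ND _] _ _]; apply: ND; [apply: hx|apply: hy].
- by move=> r x hx N hN; case: (hN) => [[_ _ NZ] _ _]; apply: NZ; apply: hx.
Qed.

Lemma modrad_aut (f : {linear X -> X}) : bijective f ->
  forall x, modrad x <-> modrad (f x).
Proof.
case=> g fg gf.
have fD : forall a b, f (a + b) = f a + f b by move=> a b; rewrite linearD.
have fZ : forall (r : R) a, f (r *: a) = r *: f a by move=> r a; rewrite linearZ.
have gD : forall a b, g (a + b) = g a + g b.
  by move=> a b; apply: (can_inj fg); rewrite fD !gf.
have gZ : forall (r : R) a, g (r *: a) = r *: g a.
  by move=> r a; apply: (can_inj fg); rewrite fZ !gf.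
move=> x; split => h N hN.
- exact: (h _ (premax fD fZ fg gf hN)).
- rewrite -(fg x); exact: (h _ (premax gD gZ gf fg hN)).
Qed.

End Rad.

Unset Implicit Arguments.

Theorem lemma4p9 (R : comPzRingType) (M : lmodType R) (C : M -> M -> Prop)
  (X : lmodType R) (TX : {linear X -> X}) (rho : {linear X -> M}) :
  is_linrel C -> is_reduction C TX rho ->
  rel_morph (graph TX) C rho /\
  (meets_in_radical C rho ->
     (* rad(X) is an R[T,T^-1]-submodule, so the inclusion is a morphism *)
     [/\ is_submod (@modrad R X) /\ (forall x, modrad x <-> modrad (TX x)),
     (* x |-> rho x + C^flat is a well-defined map X -> C^sharp/C^flat
        that is T-equivariant (it is R-linear since rho is) *)
         (forall x, Csharp C (rho x)),
         (forall x m', Tquot C (rho x) m' -> Cflat C (rho (TX x) - m')),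
     (* exactness at X: kernel = rad(X) *)
         (forall x, Cflat C (rho x) <-> modrad x) &
     (* surjectivity onto C^sharp/C^flat *)
         (forall m, Csharp C m -> exists x, Cflat C (m - rho x))]).
Proof.
move=> hC [hbij hsh hT]; have hI := linrel_inv hC.
split; first by move=> x y ->; apply: hT.
move=> hrad; split.
- by split; [apply: modrad_submod | apply: modrad_aut].
- by move=> x; apply/hsh; exists 0, x; split; [apply: Cflat0 | rewrite add0r].
- move=> x m' [hm' [c [y [hc hy em]]]]; subst m'.
  have hd : C 0 (rho (TX x) - y).
    case: hC => _ HD HZ.
    have := HD _ _ _ _ (hT x) (HZ (-1) _ _ hy).
    by rewrite !scaleN1r !subrr.
  have hyp : Cpp C y.
    have -> : y = (c + y) - c by rewrite addrC addKr.
    apply: CppD => //; first by case: hm'.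
    by have := CppZ (-1) hC (Cflat_Cpp hC hc); rewrite scaleN1r.
  have hdf : Cflat C (rho (TX x) - y).
    exists (rho (TX x) - y), 0; split; first by rewrite addr0.
    + split.
      * have hs : Csharp C (rho (TX x)).
          by apply/hsh; exists 0, (TX x); split; [apply: Cflat0 | rewrite add0r].
        apply: CppD => //; first by case: hs.
        by have := CppZ (-1) hC hyp; rewrite scaleN1r.
      * exists (fun n => if n is 0%N then rho (TX x) - y else 0); split => //.
          by case=> [|n] //=; case: hI.
        by exists 1%N => [[|n]].
    + by split; [apply: Cpp0 | apply: Cp0].
  have -> : rho (TX x) - (c + y) = (rho (TX x) - y) + - c.
    by rewrite opprD addrA addrAC.
  by apply: CflatD => //; apply: CflatN.
- exact: hrad.
- move=> m /hsh [c [x [hc ->]]]; exists x; by rewrite addrK.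
Qed.
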